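(* The function $F$ is Lebesgue integrable on $[0,1]$ and $$\int_0^1F(x)\,dx=z_1+\sum_{n=2}^{\infty}\Big(z_n\prod_{k=1}^{n-1}\sigma_k\Big),$$ where $z_n=\sum_{i=0}^{m_n}\beta_{i,n}q_{i,n}$ and $\sigma_n=\sum_{i=0}^{m_n}p_{i,n}q_{i,n}$.
   Context: Let $(m_n)_{n\ge1}$ be finite nonnegative integers and $\tilde Q=\|q_{i,n}\|$ ($i\in\{0,\dots,m_n\}$) with $q_{i,n}>0$, $\sum_{i}q_{i,n}=1$ for all $n$, and $\prod_n q_{i_n,n}=0$ for every digit sequence $(i_n)$. Put $a_{0,n}=0$, $a_{i,n}=\sum_{l<i}q_{l,n}$; $\Delta^{\tilde Q}_{j_1j_2\dots}=a_{j_1,1}+\sum_{n\ge2}a_{j_n,n}\prod_{l<n}q_{j_l,l}$. The nega-$\tilde Q$-representation $x=\Delta^{-\tilde Q}_{i_1i_2\dots}$ means $x=\Delta^{\tilde Q}_{i_1[m_2-i_2]i_3[m_4-i_4]\dots}$; every $x\in[0,1]$ has one. Let $P=\|p_{i,n}\|$ have the same shape with $p_{i,n}\in(-1,1)$, $\sum_ip_{i,n}=1$, $\prod_n|p_{i_n,n}|=0$ for every digit sequence, $0<\sum_{i<c}p_{i,n}<1$ for $c\in\{1,\dots,m_n\}$. Put $\beta_{0,n}=0$, $\beta_{c,n}=\sum_{i<c}p_{i,n}$; for odd $n$: $\tilde p_{i,n}=p_{i,n}$, $\tilde\beta_{i,n}=\beta_{i,n}$; for even $n$: $\tilde p_{i,n}=p_{m_n-i,n}$,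 $\tilde\beta_{i,n}=\beta_{m_n-i,n}$. $F(x)=\beta_{i_1,1}+\sum_{k\ge2}\tilde\beta_{i_k,k}\prod_{j<k}\tilde p_{i_j,j}$ for $x=\Delta^{-\tilde Q}_{i_1i_2\dots}$ (independent of the representation). *)

(* Defs.v *)
(* Indices n of the matrices are 1-based as in the
   paper (n >= 1); the values at n = 0 are irrelevant.  Entries q_{i,n} are
   written [q i n]. *)
From HB Require Import structures.
From mathcomp Require Import all_boot all_order all_algebra.
From mathcomp Require Import all_classical all_reals all_analysis.
From Stdlib Require Import ClassicalEpsilon.
Set Implicit Arguments. Unset Strict Implicit. Unset Printing Implicit Defensive.
Import Order.TTheory GRing.Theory Num.Theory.
Import numFieldNormedType.Exports.
Local Open Scope classical_set_scope.
Local Open Scope ring_scope.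

Section Defs.
Variable R : realType.

Definition digit_seq (m : nat -> nat) (d : nat -> nat) : Prop :=
  forall n, (1 <= n)%N -> (d n <= m n)%N.

Definition valid_Q (m : nat -> nat) (q : nat -> nat -> R) : Prop :=
  [/\ (forall n i, (1 <= n)%N -> (i <= m n)%N -> 0 < q i n),
      (forall n, (1 <= n)%N -> \sum_(i < (m n).+1) q i n = 1) &
      (forall d, digit_seq m d ->
         (fun N => \prod_(1 <= k < N) q (d k) k) @ \oo --> (0 : R))].

Definition valid_P (m : nat -> nat) (p : nat -> nat -> R) : Prop :=
  [/\ (forall n i, (1 <= n)%N -> (i <= m n)%N -> -1 < p i n < 1),
      (forall n, (1 <= n)%N -> \sum_(i < (m n).+1) p i n = 1),
      (forall d, digit_seq m d ->
         (fun N => \prod_(1 <= k < N) `|p (d k) k|) @ \oo --> (0 : R)) &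
      (forall n c, (1 <= n)%N -> (1 <= c <= m n)%N ->
         0 < \sum_(i < c) p i n < 1)].

Definition aQ (q : nat -> nat -> R) (i n : nat) : R := \sum_(l < i) q l n.

Definition DeltaQ (q : nat -> nat -> R) (j : nat -> nat) : R :=
  limn (fun N => \sum_(1 <= n < N)
                   aQ q (j n) n * \prod_(1 <= l < n) q (j l) l).

(* digits of the nega-Q~ representation converted into Q~ digits:
   i_1 [m_2 - i_2] i_3 [m_4 - i_4] ... *)
Definition nega_to_Q (m : nat -> nat) (i : nat -> nat) : nat -> nat :=
  fun n => if odd n then i n else (m n - i n)%N.

Definition is_nega_repr (m : nat -> nat) (q : nat -> nat -> R) (x : R)
    (i : nat -> nat) : Prop :=
  digit_seq m i /\ x = DeltaQ q (nega_to_Q m i).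

(* a chosen nega-Q~ representation of x (arbitrary if none exists) *)
Definition nega_digits (m : nat -> nat) (q : nat -> nat -> R) (x : R) :
    nat -> nat :=
  epsilon (inhabits (fun _ => 0%N)) (is_nega_repr m q x).

Definition betaP (p : nat -> nat -> R) (c n : nat) : R := \sum_(i < c) p i n.

Definition ptilde (m : nat -> nat) (p : nat -> nat -> R) (i n : nat) : R :=
  if odd n then p i n else p (m n - i)%N n.

Definition betatilde (m : nat -> nat) (p : nat -> nat -> R) (i n : nat) : R :=
  if odd n then betaP p i n else betaP p (m n - i)%N n.

(* F(x) = beta_{i_1,1} + sum_{k>=2} betatilde_{i_k,k} prod_{j<k} ptilde_{i_j,j}
   (beta_{.,1} = betatilde_{.,1} since 1 is odd) *)
Definition F_of_digits (m : nat -> nat) (p : nat -> nat -> R) (i : nat -> nat) : R :=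
  limn (fun N => \sum_(1 <= k < N)
                   betatilde m p (i k) k * \prod_(1 <= j < k) ptilde m p (i j) j).

Definition F (m : nat -> nat) (q p : nat -> nat -> R) (x : R) : R :=
  F_of_digits m p (nega_digits m q x).

Definition zQ (m : nat -> nat) (q p : nat -> nat -> R) (n : nat) : R :=
  \sum_(i < (m n).+1) betaP p i n * q i n.

Definition sigmaQ (m : nat -> nat) (q p : nat -> nat -> R) (n : nat) : R :=
  \sum_(i < (m n).+1) p i n * q i n.

End Defs.

(* Main.v *)
From Stdlib Require Import ClassicalEpsilon.
Require Import Defs.
From HB Require Import structures.
From mathcomp Require Import all_boot all_order all_algebra.
From mathcomp Require Import all_classical all_reals all_analysis.
From mathcomp Require Import ring lra.
From mathcomp Require Import measurable_realfun.
Import Order.TTheory GRing.Theory Num.Theory.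
Import numFieldNormedType.Exports.
Local Open Scope classical_set_scope.
Local Open Scope ring_scope.

Set Implicit Arguments. Unset Strict Implicit. Unset Printing Implicit Defensive.


Section Generic.
Variable R : realType.
Variable m : nat -> nat.
Variable r : nat -> nat -> R.

Definition gb (c n : nat) : R := \sum_(i < c) r i n.

Definition ps (j : nat -> nat) (n N : nat) : R :=
  \sum_(n <= k < N) gb (j k) k * \prod_(n <= l < k) r (j l) l.

Lemma gbS c n : gb c.+1 n = gb c n + r c n.
Proof. by rewrite /gb big_ord_recr. Qed.

Lemma psS j n N : (n < N)%N -> ps j n N = gb (j n) n + r (j n) n * ps j n.+1 N.
Proof.
move=> nN; rewrite /ps big_ltn // big_geq // mulr1; congr (_ + _).
rewrite mulr_sumr; apply: eq_big_nat => k /andP[hk _].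
by rewrite (@big_ltn _ _ _ n k) ?(ltn_trans (ltnSn n) hk) // mulrCA.
Qed.

Lemma ps_nil j n N : (N <= n)%N -> ps j n N = 0.
Proof. by move=> h; rewrite /ps big_geq. Qed.

Lemma ps_split j n k N : (n <= k <= N)%N ->
  ps j n N = ps j n k + (\prod_(n <= l < k) r (j l) l) * ps j k N.
Proof.
move=> /andP[nk kN]; rewrite /ps (big_cat_nat nk kN) /=; congr (_ + _).
rewrite mulr_sumr; apply: eq_big_nat => i /andP[ki _].
by rewrite (big_cat_nat nk ki) /= mulrCA.
Qed.

Lemma ps_eq j j' n N : (forall l, (n <= l < N)%N -> j l = j' l) ->
  ps j n N = ps j' n N.
Proof.
move=> h; apply: eq_big_nat => k /andP[nk kN]; rewrite h ?nk //; congr (_ * _).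
apply: eq_big_nat => l /andP[nl lk]; rewrite h // nl (ltn_trans lk kN) //.
Qed.

Hypothesis hb : forall n c, (1 <= n)%N -> (c <= (m n).+1)%N -> 0 <= gb c n <= 1.

Lemma ps_bound j n N : digit_seq m j -> (1 <= n)%N -> 0 <= ps j n N <= 1.
Proof.
move=> dj hn; move: n hn.
suff H : forall d n, (1 <= n)%N -> 0 <= ps j n (n + d) <= 1.
  move=> n hn.
  have [Nn|nN] := leqP N n; first by rewrite ps_nil // lexx ler01.
  by rewrite -(subnKC (ltnW nN)); apply: H.
elim=> [|d IH] {}n hn'; first by rewrite addn0 ps_nil // lexx ler01.
rewrite psS; last by rewrite addnS ltnS leq_addr.
rewrite -addSnnS; have /andP[v0 v1] := IH n.+1 isT.
have jn := dj n hn'.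
have /andP[b0 b1] := hb hn' (leqW jn).
have /andP[c0 c1] := hb hn' (jn : (j n).+1 <= (m n).+1)%N.
rewrite gbS in c0 c1.
apply/andP; split; nra.
Qed.

Lemma ps_cvg j : digit_seq m j ->
  (fun N => \prod_(1 <= k < N) `|r (j k) k|) @ \oo --> (0 : R) ->
  cvgn (ps j 1).
Proof.
move=> dj h0.
suff : cauchy (ps j 1 @ \oo) by exact: cauchy_cvg.
suff : cauchy_ex (ps j 1 @ \oo) by exact: cauchy_exP.
move=> e e0; rewrite /fmapE -ball_normE /ball_.
have := cvgr0_norm_lt _ h0 _ e0 => -[N0 _ HN0].
exists (ps j 1 (maxn N0 1)), (maxn N0 1) => // M /= hM.
have h1 : (1 <= maxn N0 1 <= M)%N by rewrite leq_maxr hM.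
rewrite (ps_split j h1) opprD addrA subrr add0r normrN normrM.
have := HN0 (maxn N0 1) (leq_maxl _ _); rewrite /= ger0_norm => [hlt|]; last exact: prodr_ge0.
apply: le_lt_trans hlt; rewrite normr_prod.
rewrite -[X in _ <= X]mulr1 ler_wpM2l //; first exact: prodr_ge0.
have /andP[h2 h3] := @ps_bound j (maxn N0 1) M dj (leq_maxr _ _).
by rewrite ger0_norm.
Qed.

End Generic.


Section QPart.
Variable R : realType.
Variable m : nat -> nat.
Variable q : nat -> nat -> R.
Hypothesis hQ : valid_Q m q.

Lemma q_pos n i : (1 <= n)%N -> (i <= m n)%N -> 0 < q i n.
Proof. by case: hQ => h _ _; apply: h. Qed.

Lemma gb_diff c c' n : (1 <= n)%N -> (c <= c' <= (m n).+1)%N ->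
  gb q c n <= gb q c' n.
Proof.
move=> hn /andP[cc' c'm]; rewrite /gb -!(big_mkord xpredT (fun i => q i n)).
rewrite (big_cat_nat (n:=c) (leq0n c) cc') /= lerDl.
rewrite big_nat_cond; apply: sumr_ge0 => i /andP[/andP[_ ic'] _]; apply/ltW/q_pos => //.
by rewrite -ltnS (leq_trans ic').
Qed.

Lemma gb_top n : (1 <= n)%N -> gb q (m n).+1 n = 1.
Proof. by case: hQ => _ h _ hn; apply: h. Qed.

Lemma hbq n c : (1 <= n)%N -> (c <= (m n).+1)%N -> 0 <= gb q c n <= 1.
Proof.
move=> hn hc; apply/andP; split.
  have -> : 0 = gb q 0 n by rewrite /gb big_ord0.
  by apply: (gb_diff hn); rewrite leq0n.
by rewrite -(gb_top hn); apply: gb_diff; rewrite // hc leqnn.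
Qed.

Definition lo n j := ps q j 1 n.+1.
Definition len n j := \prod_(1 <= l < n.+1) q (j l) l.

Lemma len_ge0 n j : digit_seq m j -> 0 <= len n j.
Proof.
move=> dj; rewrite /len big_nat_cond; apply: prodr_ge0 => l /andP[/andP[hl _] _]; exact/ltW/q_pos/dj.
Qed.

Lemma len_gt0 n j : digit_seq m j -> 0 < len n j.
Proof.
move=> dj; rewrite /len big_nat_cond; apply: prodr_gt0 => l /andP[/andP[hl _] _]; exact/q_pos/dj.
Qed.

Lemma lo_S n j : lo n.+1 j = lo n j + len n j * gb q (j n.+1) n.+1.
Proof.
rewrite /lo (@ps_split _ q j 1 n.+1 n.+2) //. rewrite (@psS _ q j n.+1 n.+2) //. rewrite (@ps_nil _ q j n.+2 n.+2) // mulr0 addr0.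
by []. by rewrite /= leqnSn.
Qed.

Lemma len_S n j : len n.+1 j = len n j * q (j n.+1) n.+1.
Proof. by rewrite /len big_nat_recr. Qed.

Lemma nested n j : digit_seq m j ->
  lo n j <= lo n.+1 j /\ lo n.+1 j + len n.+1 j <= lo n j + len n j.
Proof.
move=> dj; rewrite lo_S len_S.
have hl := len_ge0 n dj.
have jn := dj n.+1 isT.
have /andP[a0 a1] := hbq (isT : (1 <= n.+1)%N) (leqW jn).
have /andP[c0 c1] := hbq (isT : (1 <= n.+1)%N) (jn : ((j n.+1).+1 <= (m n.+1).+1)%N).
rewrite gbS in c0 c1.
split; nra.
Qed.

Lemma hi_le1 n j : digit_seq m j -> lo n j + len n j <= 1.
Proof.
move=> dj; elim: n => [|n IH].
  by rewrite /lo /len ps_nil // big_geq // add0r.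
by have [_ h] := nested n dj; apply: le_trans IH.
Qed.

Lemma lo_ge0 n j : digit_seq m j -> 0 <= lo n j.
Proof. by move=> dj; have /andP[] := ps_bound hbq n.+1 dj (isT : (1 <= 1)%N). Qed.

Lemma prefix_eq n j j' : (forall l, (1 <= l <= n)%N -> j l = j' l) ->
  lo n j = lo n j' /\ len n j = len n j'.
Proof.
move=> h; split.
  by apply: ps_eq => l /andP[l1 ln]; apply: h; rewrite l1 -ltnS.
apply: eq_big_nat => l /andP[l1 ln]; rewrite h // l1 -ltnS //.
Qed.

Lemma lex_step n j j' : digit_seq m j -> digit_seq m j' ->
  (forall l, (1 <= l <= n)%N -> j l = j' l) -> (j n.+1 < j' n.+1)%N ->
  lo n.+1 j + len n.+1 j <= lo n.+1 j'.
Proof.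
move=> dj dj' hp hlt; have [e1 e2] := prefix_eq hp.
rewrite !lo_S len_S e1 e2.
have hl := len_ge0 n dj'.
have := @gb_diff (j n.+1).+1 (j' n.+1) n.+1 isT.
rewrite hlt /= (leqW (dj' n.+1 isT)) => /(_ isT); rewrite gbS => h.
nra.
Qed.

Lemma lex n j j' : digit_seq m j -> digit_seq m j' ->
  [\/ (forall l, (1 <= l <= n)%N -> j l = j' l),
      lo n j + len n j <= lo n j' | lo n j' + len n j' <= lo n j].
Proof.
move=> dj dj'; elim: n => [|n IH].
  by apply: Or31 => l /andP[l1 l0]; move: (leq_trans l1 l0).
case: IH => [hp|h|h].
- have [e|ne] := eqVneq (j n.+1) (j' n.+1).
    apply: Or31 => l /andP[l1]; rewrite leq_eqVlt => /orP[/eqP->//|].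
    by rewrite ltnS => ln; apply: hp; rewrite l1.
  case: (ltngtP (j n.+1) (j' n.+1)) => hlt; last by rewrite hlt eqxx in ne.
    by apply: Or32; apply: lex_step.
  apply: Or33; apply: lex_step => // l hl; apply/esym/hp/hl.
- apply: Or32; have [_ h1] := nested n dj; have [h2 _] := nested n dj'.
  by apply: le_trans h1 (le_trans h h2).
- apply: Or33; have [_ h1] := nested n dj'; have [h2 _] := nested n dj.
  by apply: le_trans h1 (le_trans h h2).
Qed.

End QPart.


Section QPart2.
Variable R : realType.
Variable m : nat -> nat.
Variable q : nat -> nat -> R.
Hypothesis hQ : valid_Q m q.

Lemma Dcvg j : digit_seq m j -> cvgn (ps q j 1).
Proof.
move=> dj; apply: (ps_cvg (hbq hQ)) => //.
case: hQ => _ _ /(_ j dj) h.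
suff -> : (fun N => \prod_(1 <= k < N) `|q (j k) k|) =
          (fun N => \prod_(1 <= k < N) q (j k) k) by [].
apply/funext => N; apply: eq_big_nat => k /andP[k1 _].
by rewrite ger0_norm //; apply/ltW/(q_pos hQ)/dj.
Qed.

Lemma DeltaQE j : DeltaQ q j = limn (ps q j 1).
Proof. by []. Qed.

Lemma Dbound j n : digit_seq m j ->
  lo q n j <= DeltaQ q j <= lo q n j + len q n j.
Proof.
move=> dj; rewrite DeltaQE.
have H : \forall M \near \oo,
    lo q n j <= ps q j 1 M <= lo q n j + len q n j.
  exists n.+1 => // M /= hM.
  rewrite (@ps_split _ q j 1 n.+1 M) ?hM //.
  have /andP[v0 v1] := ps_bound (hbq hQ) M dj (isT : (1 <= n.+1)%N).
  have hl := len_ge0 hQ n dj.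
  rewrite /lo /len in hl *.
  apply/andP; split; nra.
apply/andP; split.
  apply: limr_ge; first exact: Dcvg.
  by apply: filterS H => M /andP[].
apply: limr_le; first exact: Dcvg.
by apply: filterS H => M /andP[].
Qed.

Definition choose n (y : R) : nat :=
  \max_(i < (m n).+1 | gb q i n <= y) (i : nat).

Lemma choose_le n y : (choose n y <= m n)%N.
Proof. by apply/bigop.bigmax_leqP => i _; rewrite -ltnS. Qed.

Lemma choose_lo n y : 0 <= y -> gb q (choose n y) n <= y.
Proof.
move=> y0; rewrite /choose.
have P0 : gb q (@ord0 (m n)) n <= y by rewrite /gb big_ord0.
rewrite (bigop.bigmax_eq_arg ord0 P0).
by case: (@fintype.arg_maxnP _ ord0 (fun i : 'I_(m n).+1 => gb q i n <= y) (fun i : 'I_(m n).+1 => (i : nat)) P0) => i Pi _.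
Qed.

Lemma choose_hi n y : (1 <= n)%N -> y <= 1 ->
  y <= gb q (choose n y).+1 n.
Proof.
move=> hn y1; set c := choose n y.
have [mc|cm] := leqP (m n) c.
  have -> : c = m n by apply/eqP; rewrite eqn_leq mc choose_le.
  by rewrite (gb_top hQ hn).
case: (lerP (gb q c.+1 n) y) => h //; last exact: ltW.
have := @leq_bigmax_cond _ (fun i : 'I_(m n).+1 => gb q i n <= y)
   (fun i => (i : nat)) (Ordinal (cm : (c.+1 < (m n).+1)%N)) h.
by rewrite -/(choose n y) -/c ltnn.
Qed.

Section Greedy.
Variable x : R.
Hypothesis x01 : 0 <= x <= 1.

Fixpoint rem (k : nat) : R :=
  if k is k'.+1 then
    let y := rem k' in let c := choose k y in (y - gb q c k) / q c k
  else x.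

Definition gdig (l : nat) : nat := if l is l'.+1 then choose l (rem l') else 0.

Lemma gdig_valid : digit_seq m gdig.
Proof. by case=> // n _; exact: choose_le. Qed.

Lemma rem_bound k : 0 <= rem k <= 1.
Proof.
elim: k => [//|k /andP[r0 r1]] /=.
set c := choose k.+1 (rem k).
have qp : 0 < q c k.+1 by apply: (q_pos hQ) => //; apply: choose_le.
have hl := choose_lo k.+1 r0; have hh := choose_hi (isT : (1 <= k.+1)%N) r1.
rewrite -/c gbS in hl hh.
apply/andP; split.
  apply: divr_ge0; last exact: ltW. by rewrite subr_ge0.
by rewrite ler_pdivrMr // mul1r lerBlDl.
Qed.

Lemma rem_id k : x = lo q k gdig + len q k gdig * rem k.
Proof.
elim: k => [|k IH].
  by rewrite /lo /len ps_nil // big_geq // add0r mul1r.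
rewrite lo_S len_S IH /=.
set c := choose k.+1 (rem k).
have qp : 0 < q c k.+1 by apply: (q_pos hQ) => //; apply: choose_le.
rewrite -mulrA [q c k.+1 * _]mulrCA mulfV ?mulr1; last by rewrite gt_eqF.
rewrite -addrA -mulrDr; congr (_ + _ * _); rewrite /gdig -/c; ring.
Qed.

Lemma gdig_cvg : ps q gdig 1 @ \oo --> x.
Proof.
case: hQ => _ _ /(_ gdig gdig_valid) h.
apply/cvgrPdist_lt => e e0.
have := cvgr0_norm_lt _ h _ e0 => -[N0 _ HN0].
exists N0.+1 => // -[//|N] /= hN.
rewrite {1}(rem_id N) /lo addrC addKr.
have := HN0 N.+1 (ltnW hN).
rewrite /= normrM; apply: le_lt_trans.
have /andP[r0 r1] := rem_bound N.
rewrite -[X in _ <= X]mulr1 ler_wpM2l // ?normr_ge0 //.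
by rewrite ger0_norm.
Qed.

Lemma gdig_repr : x = DeltaQ q gdig.
Proof. by rewrite DeltaQE; apply/esym/cvg_lim => //; exact: gdig_cvg. Qed.

End Greedy.

Definition dig (x : R) : nat -> nat := nega_to_Q m (nega_digits m q x).

Lemma nega_spec x : 0 <= x <= 1 -> is_nega_repr m q x (nega_digits m q x).
Proof.
move=> x01; rewrite /nega_digits; apply: epsilon_spec.
exists (fun n => if odd n then gdig x n else (m n - gdig x n)%N); split.
  by move=> n hn /=; case: odd; [apply: gdig_valid | apply: leq_subr].
rewrite {1}(gdig_repr x01); congr DeltaQ; apply/funext => n.
rewrite /nega_to_Q; case: (odd n) => //; rewrite subKn //.
by case: n => [|n]; [|exact: gdig_valid].
Qed.

Lemma dig_valid x : 0 <= x <= 1 -> digit_seq m (dig x).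
Proof.
move=> /nega_spec [di _] n hn; rewrite /dig /nega_to_Q.
by case: odd; [apply: di | apply: leq_subr].
Qed.

Lemma dig_repr x : 0 <= x <= 1 -> x = DeltaQ q (dig x).
Proof. by move=> /nega_spec []. Qed.

Definition Cyl n (f : nat -> nat) : set R :=
  [set x | (0 <= x <= 1) /\ forall l, (1 <= l <= n)%N -> dig x l = f l].

Lemma Cyl_bound n f x : Cyl n f x -> lo q n f <= x <= lo q n f + len q n f.
Proof.
move=> [x01 hx]; have [e1 e2] := prefix_eq q hx.
rewrite -e1 -e2; have h := Dbound n (dig_valid x01); by rewrite -(dig_repr x01) in h.
Qed.

Lemma Cyl_open n f x : digit_seq m f ->
  lo q n f < x < lo q n f + len q n f -> Cyl n f x.
Proof.
move=> df /andP[h1 h2].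
have x01 : 0 <= x <= 1.
  have := lo_ge0 hQ n df; have := hi_le1 hQ n df.
  by move=> a b; apply/andP; split; [apply: (le_trans b (ltW h1)) | apply: (le_trans (ltW h2) a)].
have hc : Cyl n (dig x) x by split.
have /andP[b1 b2] := Cyl_bound hc.
case: (lex hQ n (dig_valid x01) df) => [hp|h|h].
- by split => // l hl; apply: hp.
- by have := le_trans b2 h; rewrite leNgt h1.
- by have := le_trans h b1; rewrite leNgt h2.
Qed.

End QPart2.


Section Meas.
Variable R : realType.
Variable m : nat -> nat.
Variable q : nat -> nat -> R.
Hypothesis hQ : valid_Q m q.

Local Notation Cyl := (Cyl m q).

Lemma Cyl_meas n f : digit_seq m f ->
  measurable (Cyl n f) /\ (@lebesgue_measure R) (Cyl n f) = (len q n f)%:E.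
Proof.
move=> df; set a := lo q n f; set b := a + len q n f.
have lp := len_gt0 hQ n df.
have hab : a < b by rewrite /b ltrDl.
have E : Cyl n f = `]a, b[ `|` (Cyl n f `&` [set a]) `|` (Cyl n f `&` [set b]).
  apply/seteqP; split => x.
    move=> hx; have /andP[h1 h2] := Cyl_bound hQ hx.
    have [xa|xa] := eqVneq x a; first by left; right; rewrite -xa.
    have [xb|xb] := eqVneq x b; first by right; rewrite -xb.
    left; left; rewrite /= in_itv /=; apply/andP; split.
      by rewrite lt_neqAle eq_sym xa h1.
    by rewrite lt_neqAle xb h2.
  move=> [[|[]//]|[]//]; rewrite /= in_itv /= => hx.
  exact: Cyl_open.
have mS c : measurable (Cyl n f `&` [set c]).
  have [h|h] := pselect (Cyl n f c).
    rewrite (_ : _ `&` _ = [set c]); first exact: measurable_set1.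
    by apply/seteqP; split => x; [case|move=> ->].
  rewrite (_ : _ `&` _ = set0) //.
  by apply/seteqP; split => x // [hx xc]; rewrite xc in hx.
have mC : measurable (Cyl n f).
  by rewrite E; apply: measurableU => //; apply: measurableU.
split => //.
apply/eqP; rewrite eq_le; apply/andP; split.
  have -> : (len q n f)%:E = (@lebesgue_measure R) `[a, b].
    by rewrite lebesgue_measure_itv /= lte_fin hab -EFinD /b addrAC subrr add0r.
  apply: le_measure; rewrite ?inE //.
  by move=> x hx; have := Cyl_bound hQ hx; rewrite /= in_itv.
have -> : (len q n f)%:E = (@lebesgue_measure R) `]a, b[.
  by rewrite lebesgue_measure_itv /= lte_fin hab -EFinD /b addrAC subrr add0r.
apply: le_measure; rewrite ?inE //.
by move=> x hx; rewrite E; left; left.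
Qed.

End Meas.

Section Key.
Variable R : realType.
Variable m : nat -> nat.
Variable q : nat -> nat -> R.
Hypothesis hQ : valid_Q m q.

Local Notation Cyl := (Cyl m q).
Local Notation dig := (dig m q).

Definition Mx n := \max_(l < n.+1) m l.

Variable n : nat.
Local Notation FF := {ffun 'I_n -> 'I_(Mx n).+1}.

Definition sq (phi : FF) : nat -> nat := fun l =>
  if l is l'.+1 then
    (if (insub l' : option 'I_n) is Some i then nat_of_ord (phi i) else 0%N)
  else 0%N.

Lemma sqE phi (i : 'I_n) : sq phi i.+1 = phi i.
Proof.
rewrite /sq; case: insubP => [j _ /val_inj -> //|].
by move=> /negP[]; exact: ltn_ord.
Qed.

Lemma sq_out phi l : (n < l)%N -> sq phi l = 0%N.
Proof.
case: l => // l hl; rewrite /sq; case: insubP => // j _ hj.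
by move: (ltn_ord j); rewrite hj ltnNge -ltnS hl.
Qed.

Definition phix (x : R) : FF := [ffun i : 'I_n => inord (dig x i.+1)].

Lemma m_le_Mx l : (l <= n)%N -> (m l <= Mx n)%N.
Proof. by move=> hl; apply: (@leq_bigmax _ (fun l : 'I_n.+1 => m l) (Ordinal (hl : (l < n.+1)%N))). Qed.

Lemma phix_val x (i : 'I_n) : 0 <= x <= 1 -> nat_of_ord (phix x i) = dig x i.+1.
Proof.
move=> x01; rewrite ffunE inordK // ltnS.
apply: leq_trans (dig_valid hQ x01 (isT : (1 <= i.+1)%N)) (m_le_Mx (ltn_ord i)).
Qed.

Lemma Cyl_sq x phi : 0 <= x <= 1 -> Cyl n (sq phi) x <-> phi = phix x.
Proof.
move=> x01; split.
  move=> [_ hx]; apply/ffunP => i; apply/val_inj => /=.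
  by rewrite phix_val // -sqE hx // ltn_ord.
move=> ->; split => // -[//|l] /andP[_ hl].
by rewrite (sqE _ (Ordinal (hl : (l < n)%N))) phix_val.
Qed.

Lemma decomp x (G : FF -> R) : 0 <= x <= 1 ->
  G (phix x) = \sum_(phi : FF) (\1_(Cyl n (sq phi)) x) * G phi.
Proof.
move=> x01; rewrite (bigD1 (phix x)) //= big1 ?addr0.
  by rewrite indicE mem_set ?mul1r //; apply/(Cyl_sq _ x01).
move=> phi hphi; rewrite indicE memNset ?mul0r //.
by move/(Cyl_sq _ x01) => e; rewrite e eqxx in hphi.
Qed.

Definition wgt (phi : FF) : R :=
  \prod_(i < n) (if (phi i <= m i.+1)%N then q (phi i) i.+1 else 0).

Lemma Cyl_w phi : measurable (Cyl n (sq phi)) /\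
  (@lebesgue_measure R) (Cyl n (sq phi)) = (wgt phi)%:E.
Proof.
have [hv|hv] := boolP [forall i, (phi i <= m i.+1)%N].
  have dv : digit_seq m (sq phi).
    move=> l hl; have [ln|nl] := leqP l n.
      case: l hl ln => // l _ ln.
      by rewrite (sqE _ (Ordinal (ln : (l < n)%N))); exact: (forallP hv).
    by rewrite sq_out.
  have [mC ->] := Cyl_meas hQ n dv; split => //; congr EFin.
  rewrite /len /wgt big_add1 -[n.+1.-1]/n big_mkord; apply: eq_bigr => i _.
  by rewrite sqE (forallP hv).
move: hv; rewrite negb_forall => /existsP[i hi].
have -> : Cyl n (sq phi) = set0.
  apply/seteqP; split => x // [x01 hx].
  have := dig_valid hQ x01 (isT : (1 <= i.+1)%N).
  by rewrite hx ?ltn_ord // sqE (negbTE hi).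
split => //; rewrite measure0; congr EFin; apply/esym.
by rewrite /wgt (bigD1 i) //= (negbTE hi) mul0r.
Qed.

Lemma integrable_indic01 (A : set R) : measurable A ->
  (@lebesgue_measure R).-integrable `[0, 1] (fun x => (\1_A x)%:E).
Proof.
move=> mA; apply/integrableP; split.
  by apply/measurable_EFinP; apply: measurable_indic.
under eq_integral => t _ do rewrite gee0_abs ?lee_fin //.
rewrite integral_indic //.
apply: (@le_lt_trans _ _ ((@lebesgue_measure R) `[0%R, 1%R])).
  by apply: le_measure; rewrite ?inE //; apply: measurableI.
by rewrite lebesgue_measure_itv /= lte_fin ltr01 -EFinD subr0 ltry.
Qed.

Lemma key (G : FF -> R) :
  (@lebesgue_measure R).-integrable `[0, 1] (fun x => (G (phix x))%:E) /\
  (\int[@lebesgue_measure R]_(x in `[0%R, 1%R]) (G (phix x))%:E =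
    (\sum_(phi : FF) G phi * wgt phi)%:E)%E.
Proof.
pose k (phi : FF) x := ((G phi)%:E * (\1_(Cyl n (sq phi)) x)%:E)%E.
have ik phi : (@lebesgue_measure R).-integrable `[0, 1] (k phi).
  by apply: integrableZl => //; apply: integrable_indic01; case: (Cyl_w phi).
have E : {in [set` `[0%R, 1%R]], (fun x => \sum_(phi : FF) k phi x)%E =1
          (fun x => (G (phix x))%:E)}.
  move=> x; rewrite inE /= in_itv /= => x01.
  rewrite (decomp _ x01) sumEFin; congr EFin; apply: eq_bigr => phi _.
  by rewrite mulrC.
split.
  apply: (@eq_integrable _ _ _ (@lebesgue_measure R) _ _ _ _ E) => //.
  exact: integrable_sum.
rewrite -(@eq_integral _ _ _ (@lebesgue_measure R) _ _ _ E) integral_sum // -sumEFin; apply: eq_bigr => phi _.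
rewrite integralZl; last by apply: integrable_indic01; case: (Cyl_w phi).
have [mC hC] := Cyl_w phi.
rewrite integral_indic // setIidl; first by rewrite EFinM; congr (_ * _)%E; exact: hC.
  by move=> x [x01 _]; rewrite /= in_itv. by [].
Qed.

End Key.


Section ProdInt.
Variable R : realType.
Variable m : nat -> nat.
Variable q : nat -> nat -> R.
Hypothesis hQ : valid_Q m q.
Local Notation dig := (dig m q).

Lemma prod_int n (g : nat -> nat -> R) :
  (@lebesgue_measure R).-integrable `[0, 1]
     (fun x => (\prod_(i < n) g i (dig x i.+1))%:E) /\
  (\int[@lebesgue_measure R]_(x in `[0%R, 1%R]) (\prod_(i < n) g i (dig x i.+1))%:E =
    (\prod_(i < n) \sum_(c < (m i.+1).+1) g i c * q c i.+1)%:E)%E.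
Proof.
have [I1 I2] := key hQ (n:=n) (fun phi => \prod_(i < n) g i (phi i)).
have E : {in [set` `[0%R, 1%R]], (fun x => (\prod_(i < n) g i (phix m q n x i))%:E) =1
          (fun x => (\prod_(i < n) g i (dig x i.+1))%:E)}.
  move=> x; rewrite inE /= in_itv /= => x01; congr EFin.
  by apply: eq_bigr => i _; rewrite phix_val.
split; first exact: (@eq_integrable _ _ _ (@lebesgue_measure R) _ _ _ _ E).
rewrite -(@eq_integral _ _ _ (@lebesgue_measure R) _ _ _ E) I2; congr EFin.
rewrite /wgt.
under eq_bigr do rewrite -big_split /=.
rewrite -(bigA_distr_bigA (fun (i : 'I_n) (c : 'I_(Mx m n).+1) =>
   g i c * (if (c <= m i.+1)%N then q c i.+1 else 0))).
apply: eq_bigr => i _.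
have hle : ((m i.+1).+1 <= (Mx m n).+1)%N by rewrite ltnS; apply: m_le_Mx.
rewrite (big_ord_widen (Mx m n).+1 (fun c => g i c * q c i.+1) hle) [RHS]big_mkcond.
apply: eq_bigr => c _; rewrite ltnS; case: ifP => _ //; by rewrite mulr0.
Qed.

End ProdInt.

Section Main.
Variable R : realType.
Variables (m : nat -> nat) (q p : nat -> nat -> R).
Hypotheses (hQ : valid_Q m q) (hP : valid_P m p).
Local Notation dig := (dig m q).

Lemma hbp n c : (1 <= n)%N -> (c <= (m n).+1)%N -> 0 <= gb p c n <= 1.
Proof.
case: hP => _ hs _ hc hn; rewrite leq_eqVlt => /orP[/eqP->|].
  by have := hs n hn; rewrite /gb => ->; rewrite ler01 lexx.
rewrite ltnS; case: c => [_|c hc']; first by rewrite /gb big_ord0 lexx ler01.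
by have /andP[h1 h2] := hc n c.+1 hn hc'; apply/andP; split; apply/ltW.
Qed.

Lemma F_eq x : F m q p x = limn (fun N => ps p (dig x) 1 N).
Proof.
rewrite /F /F_of_digits /dig.
suff -> : (fun N => \sum_(1 <= k < N) betatilde m p (nega_digits m q x k) k *
   \prod_(1 <= j < k) ptilde m p (nega_digits m q x j) j) =
   (fun N => ps p (nega_to_Q m (nega_digits m q x)) 1 N) by [].
apply/funext => N; apply: eq_bigr => k _; congr (_ * _).
  by rewrite /betatilde /nega_to_Q; case: odd.
by apply: eq_bigr => l _; rewrite /ptilde /nega_to_Q; case: odd.
Qed.

Lemma FN_cvg x : 0 <= x <= 1 -> (fun N => ps p (dig x) 1 N) @ \oo -->
  limn (fun N => ps p (dig x) 1 N).
Proof.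
move=> x01; apply: (ps_cvg hbp (dig_valid hQ x01)).
by case: hP => _ _ h _; exact: h (dig_valid hQ x01).
Qed.

Lemma FN_bound x N : 0 <= x <= 1 -> 0 <= ps p (dig x) 1 N <= 1.
Proof. by move=> x01; apply: (ps_bound hbp N (dig_valid hQ x01)). Qed.

Lemma T_int k : (1 <= k)%N ->
  (@lebesgue_measure R).-integrable `[0, 1]
     (fun x => (gb p (dig x k) k * \prod_(1 <= l < k) p (dig x l) l)%:E) /\
  (\int[@lebesgue_measure R]_(x in `[0%R, 1%R])
     (gb p (dig x k) k * \prod_(1 <= l < k) p (dig x l) l)%:E =
    (zQ m q p k * \prod_(1 <= l < k) sigmaQ m q p l)%:E)%E.
Proof.
case: k => // k _.
pose g (i c : nat) := if i == k then gb p c i.+1 else p c i.+1.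
have E : (fun x => (gb p (dig x k.+1) k.+1 * \prod_(1 <= l < k.+1) p (dig x l) l)%:E) =
         (fun x => (\prod_(i < k.+1) g i (dig x i.+1))%:E).
  apply/funext => x; congr EFin.
  rewrite big_ord_recr /= /g eqxx mulrC; congr (_ * _).
  rewrite big_add1 -[k.+1.-1]/k big_mkord; apply: eq_bigr => i _.
  by rewrite /= (ltn_eqF (ltn_ord i)).
rewrite E; have [I1 I2] := prod_int hQ k.+1 g.
split => //; rewrite I2; congr EFin.
rewrite big_ord_recr /= mulrC; congr (_ * _).
  by rewrite /zQ; apply: eq_bigr => c _; rewrite /g eqxx.
rewrite big_add1 -[k.+1.-1]/k big_mkord; apply: eq_bigr => i _.
by rewrite /sigmaQ; apply: eq_bigr => c _; rewrite /g /= (ltn_eqF (ltn_ord i)).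
Qed.

Lemma FN_int N :
  (@lebesgue_measure R).-integrable `[0, 1] (fun x => (ps p (dig x) 1 N)%:E) /\
  (\int[@lebesgue_measure R]_(x in `[0%R, 1%R]) (ps p (dig x) 1 N)%:E =
    (\sum_(1 <= n < N) zQ m q p n * \prod_(1 <= k < n) sigmaQ m q p k)%:E)%E.
Proof.
pose f (k : nat) (x : R) : \bar R := if k is 0 then 0%E
  else (gb p (dig x k) k * \prod_(1 <= l < k) p (dig x l) l)%:E.
have E : (fun x => (ps p (dig x) 1 N)%:E) = (fun x => \sum_(1 <= k < N) f k x)%E.
  apply/funext => x; rewrite /ps -sumEFin; apply: eq_big_nat => k /andP[k1 _].
  by case: k k1.
have intf k : (@lebesgue_measure R).-integrable `[0, 1] (f k).
  case: k => [|k]; first exact: integrable0.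
  exact: (T_int (isT : (1 <= k.+1)%N)).1.
rewrite E; split; first exact: integrable_sum.
rewrite integral_sum // -sumEFin; apply: eq_big_nat => k /andP[k1 _].
by case: k k1 => // k _; exact: (T_int (isT : (1 <= k.+1)%N)).2.
Qed.

End Main.

Lemma leb01 (R : realType) : ((@lebesgue_measure R) `[0%R, 1%R] < +oo)%E.
Proof. by rewrite lebesgue_measure_itv /= lte_fin ltr01 -EFinD subr0 ltry. Qed.

Theorem mainTheorem7 (R : realType) (m : nat -> nat) (q p : nat -> nat -> R) :
  valid_Q m q -> valid_P m p ->
  let S := fun N => \sum_(1 <= n < N)
             zQ m q p n * \prod_(1 <= k < n) sigmaQ m q p k in
  [/\ (@lebesgue_measure R).-integrable `[0%R, 1%R] (EFin \o F m q p),
      cvgn S &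
      (\int[@lebesgue_measure R]_(x in `[0%R, 1%R]) (F m q p x)%:E = (limn S)%:E)%E].
Proof.
move=> hQ hP S.
have mD : measurable (`[0%R, 1%R] : set R) by [].
pose f_ N := fun x => (ps p (dig m q x) 1 N)%:E.
have mf_ (N : nat) : measurable_fun (`[0%R, 1%R] : set R) (f_ N).
  apply: (measurable_int (@lebesgue_measure R)); exact: (FN_int p hQ N).1.
have cv x : [set` `[0%R, 1%R]] x -> f_ ^~ x @ \oo --> (F m q p x)%:E.
  rewrite /= in_itv /= => x01; rewrite F_eq.
  apply/fine_cvgP; split; first exact: nearW.
  exact: (FN_cvg hQ hP x01).
have mf : measurable_fun (`[0%R, 1%R] : set R) (EFin \o F m q p).
  apply/measurable_EFinP.
  apply: (@measurable_fun_cvg _ _ _ _ (fun N x => ps p (dig m q x) 1 N)).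
    by move=> N; apply/measurable_EFinP; exact: mf_.
  move=> x; rewrite /= in_itv /= => x01; rewrite F_eq.
  exact: (FN_cvg hQ hP x01).
have ig : (@lebesgue_measure R).-integrable `[0%R, 1%R] (EFin \o cst 1).
  apply: (@measurable_bounded_integrable _ _ _ (@lebesgue_measure R)) => //.
  - exact: leb01.
  - exact: bounded_cst.
have fg x N : [set` `[0%R, 1%R]] x -> (`|f_ N x| <= 1)%E.
  rewrite /= in_itv /= => x01.
  rewrite /f_ /= lee_fin; have /andP[h0 h1] := FN_bound hQ hP N x01.
  by rewrite ger0_norm.
have [iF _ cvI] := @dominated_convergence _ _ _ (@lebesgue_measure R) _ mD
  f_ (EFin \o F m q p) (EFin \o cst 1) mf_ mf
  (@aeW _ _ _ (@lebesgue_measure R) _ (fun x hx => cv x hx)) ig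
  (@aeW _ _ _ (@lebesgue_measure R) _ (fun x N hx => fg x N hx)).
have cvS : (fun N => (S N)%:E) @ \oo --> (\int[@lebesgue_measure R]_(x in `[0%R, 1%R]) (EFin \o F m q p) x)%E.
  suff <- : (fun N => \int[@lebesgue_measure R]_(x in `[0%R, 1%R]) f_ N x)%E =
            (fun N => (S N)%:E) by exact: cvI.
  by apply/funext => N; exact: (FN_int p hQ N).2.
have fin := @integrable_fin_num _ _ _ (@lebesgue_measure R) _ mD _ iF.
rewrite -(fineK fin) in cvS.
have /fine_cvgP [_ cS] := cvS.
split => //; first by apply/cvg_ex; eexists; exact: cS.
by rewrite (cvg_lim _ cS) // fineK.
Qed.
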